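(* Let $A$ be a double Poisson algebra and $(M,\{\!\{-,-\}\!\}_M)$ a double Poisson $A$-bimodule. Then the brackets $\{-,-\}_M=\mu_M\circ\{\!\{-,-\}\!\}_M$ and $\{-,-\}_{M,\natural}=\natural\circ\{-,-\}_M$ make $M$ and $M_\natural=M/[A,M]$, respectively, into Lie modules over the Lie algebra $(A_\natural,\{-,-\})$, where $A_\natural=A/[A,A]$ and $\{-,-\}=\mu\circ\{\!\{-,-\}\!\}$.
   Context: $A$ is a unital associative $k$-algebra and $\mu$ its multiplication. A double bracket on $A$ is a bilinear map $\{\!\{-,-\}\!\}:A\times A\to A\otimes A$ with $\{\!\{a,b\}\!\}=-\{\!\{b,a\}\!\}^\circ$ ($(u\otimes v)^\circ=v\otimes u$) and $\{\!\{a,bc\}\!\}=b\{\!\{a,c\}\!\}+\{\!\{a,b\}\!\}c$ for the outer bimodule structure $b(a_1\otimes a_2)c=ba_1\otimes a_2c$; the inner structure is $b*(a_1\otimes a_2)*c=a_1c\otimes ba_2$. With $\{\!\{a,b_1\otimes\cdots\otimes b_n\}\!\}_L=\{\!\{a,b_1\}\!\}\otimes b_2\otimes\cdots\otimes b_n$ and $\sigma_s(b_1\otimes\cdots\otimes b_n)=b_{s^{-1}(1)}\otimes\cdots\otimes b_{s^{-1}(n)}$, $A$ is a double Poisson algebra if $\{\!\{a,\{\!\{b,c\}\!\}\}\!\}_L+\sigma_{(123)}\{\!\{b,\{\!\{c,a\}\!\}\}\!\}_L+\sigma_{(132)}\{\!\{c,\{\!\{a,b\}\!\}\}\!\}_L=0$;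 then $\{-,-\}$ induces a Lie bracket on $A_\natural$. For an $A$-bimodule $M$, a double Poisson bracket on $M$ is a bilinear $\{\!\{-,-\}\!\}_M:A\times M\to(A\otimes M)\oplus(M\otimes A)$ with (i) $\{\!\{a,bm\}\!\}_M=\{\!\{a,b\}\!\}m+b\{\!\{a,m\}\!\}_M$, $\{\!\{a,mb\}\!\}_M=\{\!\{a,m\}\!\}_Mb+m\{\!\{a,b\}\!\}$; (ii) $\{\!\{ab,m\}\!\}_M=a*\{\!\{b,m\}\!\}_M+\{\!\{a,m\}\!\}_M*b$. Put $\{\!\{m,b\}\!\}_M=-(\{\!\{b,m\}\!\}_M)^\circ$; if $\{\!\{b,m\}\!\}_M=(b_1\otimes m_1)\oplus(m_2\otimes b_2)$ set $\{\!\{a,\{\!\{b,m\}\!\}_M\}\!\}_L=(\{\!\{a,b_1\}\!\}\otimes m_1)\oplus(\{\!\{a,m_2\}\!\}_M\otimes b_2)$, and $\{\!\{m,\{\!\{a,b\}\!\}\}\!\}_L=\{\!\{m,\{\!\{a,b\}\!\}'\}\!\}_M\otimes\{\!\{a,b\}\!\}''$. $M$ is a double Poisson $A$-bimodule if also (iii) $\{\!\{a,\{\!\{b,m\}\!\}_M\}\!\}_L+\sigma_{(123)}\{\!\{b,\{\!\{m,a\}\!\}_M\}\!\}_L+\sigma_{(132)}\{\!\{m,\{\!\{a,b\}\!\}\}\!\}_L=0$. $\mu_M$ is the bimodule action map $(A\otimes M)\oplus(M\otimes A)\to M$ and $\natural:M\to M_\natural$ the projection. $\{-,-\}_M$ induces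 a map $A_\natural\times M\to M$ and $\{-,-\}_{M,\natural}$ a map $A_\natural\times M_\natural\to M_\natural$. *)

(* Defs.v *)
(* Tensor products are represented by finite lists of pure
   tensors; equality in the tensor product is characterised by its universal
   property (equal images under every k-multilinear map into every k-module). *)
From HB Require Import structures.
From mathcomp Require Import all_boot all_algebra.
Set Implicit Arguments. Unset Strict Implicit. Unset Printing Implicit Defensive.
Import GRing.Theory.
Local Open Scope ring_scope.

Definition bilin2 (k : fieldType) (U V W : lmodType k) (f : U -> V -> W) : Prop :=
  (forall (c : k) x y z, f (c *: x + y) z = c *: f x z + f y z) /\
  (forall (c : k) x y z, f x (c *: y + z) = c *: f x y + f x z).

Definition trilin3 (k : fieldType) (U V X W : lmodType k) (f : U -> V -> X -> W) : Prop :=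
  [/\ (forall (c : k) x x' y z, f (c *: x + x') y z = c *: f x y z + f x' y z),
      (forall (c : k) x y y' z, f x (c *: y + y') z = c *: f x y z + f x y' z) &
      (forall (c : k) x y z z', f x y (c *: z + z') = c *: f x y z + f x y z')].

Definition tens2_eq (k : fieldType) (U V : lmodType k) (s t : seq (U * V)) : Prop :=
  forall (W : lmodType k) (f : U -> V -> W), bilin2 f ->
    \sum_(p <- s) f p.1 p.2 = \sum_(p <- t) f p.1 p.2.

Definition tens3_zero (k : fieldType) (U V X : lmodType k) (s : seq (U * V * X)) : Prop :=
  forall (W : lmodType k) (f : U -> V -> X -> W), trilin3 f ->
    \sum_(p <- s) f p.1.1 p.1.2 p.2 = 0.

Definition tscale (k : fieldType) (U V : lmodType k) (c : k) (s : seq (U * V)) :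
  seq (U * V) := [seq (c *: p.1, p.2) | p <- s].

Definition tflip (U V : zmodType) (s : seq (U * V)) : seq (V * U) :=
  [seq (- p.2, p.1) | p <- s].

(* {{f, -}}_L applied to the first tensor factor: (x (x) z) |-> f x (x) z *)
Definition tensL (U X Y Z : Type) (f : U -> seq (X * Y)) (s : seq (U * Z)) :
  seq (X * Y * Z) :=
  flatten [seq [seq (x.1, x.2, p.2) | x <- f p.1] | p <- s].

Definition sig123 (X Y Z : Type) (t : X * Y * Z) : Z * X * Y := (t.2, t.1.1, t.1.2).
Definition sig132 (X Y Z : Type) (t : X * Y * Z) : Y * Z * X := (t.1.2, t.2, t.1.1).

Definition double_bracket (k : fieldType) (A : algType k)
    (dbr : A -> A -> seq (A * A)) : Prop :=
  [/\ (forall (c : k) x y z,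
         tens2_eq (dbr (c *: x + y) z) (tscale c (dbr x z) ++ dbr y z)),
      (forall (c : k) x y z,
         tens2_eq (dbr x (c *: y + z)) (tscale c (dbr x y) ++ dbr x z)),
      (forall a b, tens2_eq (dbr a b) (tflip (dbr b a))) &
      (forall a b c, tens2_eq (dbr a (b * c))
         ([seq (b * p.1, p.2) | p <- dbr a c] ++ [seq (p.1, p.2 * c) | p <- dbr a b]))].

Definition double_jacobi (k : fieldType) (A : algType k)
    (dbr : A -> A -> seq (A * A)) : Prop :=
  forall a b c,
    tens3_zero (tensL (dbr a) (dbr b c)
                ++ map (@sig123 _ _ _) (tensL (dbr b) (dbr c a))
                ++ map (@sig132 _ _ _) (tensL (dbr c) (dbr a b))).

Definition double_poisson (k : fieldType) (A : algType k)
    (dbr : A -> A -> seq (A * A)) : Prop :=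
  double_bracket dbr /\ double_jacobi dbr.

(* A-bimodule structure (k acting symmetrically) *)
Definition bimodule (k : fieldType) (A : algType k) (M : lmodType k)
    (la : A -> M -> M) (ra : M -> A -> M) : Prop :=
  [/\ bilin2 la, bilin2 ra,
      (forall m, la 1 m = m /\ ra m 1 = m),
      (forall a b m, la (a * b) m = la a (la b m) /\ ra m (a * b) = ra (ra m a) b) &
      (forall a b m, la a (ra m b) = ra (la a m) b)].

Definition pair_eq (k : fieldType) (A M : lmodType k)
    (u v : seq (A * M) * seq (M * A)) : Prop :=
  tens2_eq u.1 v.1 /\ tens2_eq u.2 v.2.

(* {{m, b}}_M = - ({{b, m}}_M)°, as an element of (A (x) M) (+) (M (x) A) *)
Definition flipM (A M : zmodType) (u : seq (A * M) * seq (M * A)) :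
  seq (A * M) * seq (M * A) := (tflip u.2, tflip u.1).

Definition double_poisson_bimodule (k : fieldType) (A : algType k) (M : lmodType k)
    (dbr : A -> A -> seq (A * A)) (la : A -> M -> M) (ra : M -> A -> M)
    (dbrM : A -> M -> seq (A * M) * seq (M * A)) : Prop :=
  [/\
      (forall (c : k) x y m, pair_eq (dbrM (c *: x + y) m)
          (tscale c (dbrM x m).1 ++ (dbrM y m).1, tscale c (dbrM x m).2 ++ (dbrM y m).2))
      /\
      (forall (c : k) a m n, pair_eq (dbrM a (c *: m + n))
          (tscale c (dbrM a m).1 ++ (dbrM a n).1, tscale c (dbrM a m).2 ++ (dbrM a n).2)),
      (forall a b m, pair_eq (dbrM a (la b m))
          ([seq (p.1, la p.2 m) | p <- dbr a b] ++ [seq (b * p.1, p.2) | p <- (dbrM a m).1],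
           [seq (la b p.1, p.2) | p <- (dbrM a m).2])),
      (forall a b m, pair_eq (dbrM a (ra m b))
          ([seq (p.1, ra p.2 b) | p <- (dbrM a m).1],
           [seq (p.1, p.2 * b) | p <- (dbrM a m).2] ++ [seq (ra m p.1, p.2) | p <- dbr a b])),
      (forall a b m, pair_eq (dbrM (a * b) m)
          ([seq (p.1, la a p.2) | p <- (dbrM b m).1] ++ [seq (p.1 * b, p.2) | p <- (dbrM a m).1],
           [seq (p.1, a * p.2) | p <- (dbrM b m).2] ++ [seq (ra p.1 b, p.2) | p <- (dbrM a m).2])) &
      (* (iii): the three components in A(x)A(x)M, A(x)M(x)A, M(x)A(x)A vanish *)
      (forall a b m,
        let u := dbrM b m in
        let w := flipM (dbrM a m) in
        let xs := dbr a b in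
        [/\ tens3_zero (tensL (dbr a) u.1
              ++ map (@sig123 _ _ _) (tensL (fun n => (dbrM b n).1) w.2)
              ++ map (@sig132 _ _ _) (tensL (fun n => (flipM (dbrM n m)).2) xs)),
            tens3_zero (tensL (fun n => (dbrM a n).1) u.2
              ++ map (@sig123 _ _ _) (tensL (fun n => (dbrM b n).2) w.2)) &
            tens3_zero (tensL (fun n => (dbrM a n).2) u.2
              ++ map (@sig123 _ _ _) (tensL (dbr b) w.1)
              ++ map (@sig132 _ _ _) (tensL (fun n => (flipM (dbrM n m)).1) xs))])].

Definition mu (k : fieldType) (A : algType k) (s : seq (A * A)) : A :=
  \sum_(p <- s) p.1 * p.2.

Definition muM (k : fieldType) (A : algType k) (M : lmodType k)
    (la : A -> M -> M) (ra : M -> A -> M) (u : seq (A * M) * seq (M * A)) : M :=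
  \sum_(p <- u.1) la p.1 p.2 + \sum_(p <- u.2) ra p.1 p.2.

Definition comm_span (R : nzRingType) (c : R) : Prop :=
  exists s : seq (R * R), c = \sum_(p <- s) (p.1 * p.2 - p.2 * p.1).

Definition bimod_comm_span (k : fieldType) (A : algType k) (M : lmodType k)
    (la : A -> M -> M) (ra : M -> A -> M) (m : M) : Prop :=
  exists s : seq (A * M), m = \sum_(p <- s) (la p.1 p.2 - ra p.2 p.1).

(* act : A -> V -> V induces a Lie module structure of V/IV over the Lie algebra
   (A/IA, br): it is well defined on the quotients, bilinear, and
   {br a b, v} = {a, {b, v}} - {b, {a, v}}  (all modulo IV). *)
Definition lie_module_mod (k : fieldType) (A V : lmodType k)
    (IA : A -> Prop) (IV : V -> Prop)
    (br : A -> A -> A) (act : A -> V -> V) : Prop :=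
  [/\ (forall c v, IA c -> IV (act c v)),
      (forall a v, IV v -> IV (act a v)),
      (forall (c : k) a b v, IV (act (c *: a + b) v - (c *: act a v + act b v))),
      (forall (c : k) a v w, IV (act a (c *: v + w) - (c *: act a v + act a w))) &
      (forall a b v, IV (act (br a b) v - (act a (act b v) - act b (act a v))))].

(* Main.v *)
Require Import Defs.
From HB Require Import structures.
From mathcomp Require Import all_boot all_algebra.
Set Implicit Arguments. Unset Strict Implicit. Unset Printing Implicit Defensive.
Import GRing.Theory.
Local Open Scope ring_scope.

From mathcomp Require Import ssrAC.
Definition lin1 (k : fieldType) (U W : lmodType k) (g : U -> W) :=
  forall (c : k) x y, g (c *: x + y) = c *: g x + g y.

Lemma lin1_0 (k : fieldType) (U W : lmodType k) (g : U -> W) : lin1 g -> g 0 = 0.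
Proof.
move=> H; have := H 1 0 0; rewrite !scale1r add0r => E.
by apply: (addrI (g 0)); rewrite addr0 -{1}E.
Qed.

Lemma lin1_Z (k : fieldType) (U W : lmodType k) (g : U -> W) : lin1 g -> forall c x, g (c *: x) = c *: g x.
Proof. by move=> H c x; have := H c x 0; rewrite !addr0 (lin1_0 H) addr0. Qed.

Lemma lin1_D (k : fieldType) (U W : lmodType k) (g : U -> W) : lin1 g -> forall x y, g (x + y) = g x + g y.
Proof. by move=> H x y; have := H 1 x y; rewrite !scale1r. Qed.

Lemma lin1_N (k : fieldType) (U W : lmodType k) (g : U -> W) : lin1 g -> forall x, g (- x) = - g x.
Proof. by move=> H x; rewrite -scaleN1r (lin1_Z H) scaleN1r. Qed.

Lemma lin1_B (k : fieldType) (U W : lmodType k) (g : U -> W) : lin1 g -> forall x y, g (x - y) = g x - g y.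
Proof. by move=> H x y; rewrite (lin1_D H) (lin1_N H). Qed.

Lemma lin1_sum (k : fieldType) (U W : lmodType k) (g : U -> W) : lin1 g ->
  forall (I : Type) (s : seq I) (F : I -> U), g (\sum_(i <- s) F i) = \sum_(i <- s) g (F i).
Proof.
move=> H I s F; elim: s => [|i s IH]; first by rewrite !big_nil (lin1_0 H).
by rewrite !big_cons (lin1_D H) IH.
Qed.

Lemma bilin_l (k : fieldType) (U V W : lmodType k) (f : U -> V -> W) y :
  bilin2 f -> lin1 (f ^~ y).
Proof. by case=> H _ c x x'; apply: H. Qed.

Lemma bilin_r (k : fieldType) (U V W : lmodType k) (f : U -> V -> W) x :
  bilin2 f -> lin1 (f x).
Proof. by case=> _ H c y y'; apply: H. Qed.

Lemma sum_tscale (k : fieldType) (U V W : lmodType k) (f : U -> V -> W) c s :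
  bilin2 f -> \sum_(p <- tscale c s) f p.1 p.2 = c *: \sum_(p <- s) f p.1 p.2.
Proof.
move=> H; rewrite big_map scaler_sumr; apply: eq_bigr => p _ /=.
exact: (lin1_Z (bilin_l _ H)).
Qed.

Lemma sum_tflip (k : fieldType) (U V W : lmodType k) (f : U -> V -> W) s :
  bilin2 f -> \sum_(p <- tflip s) f p.1 p.2 = - \sum_(p <- s) f p.2 p.1.
Proof.
move=> H; rewrite big_map -sumrN; apply: eq_bigr => p _ /=.
exact: (lin1_N (bilin_l _ H)).
Qed.

Lemma sum_tensL (X Y Z U : Type) (W : zmodType) (f : U -> seq (X * Y)) (s : seq (U * Z)) (F : X -> Y -> Z -> W) :
  \sum_(t <- tensL f s) F t.1.1 t.1.2 t.2 = \sum_(p <- s) \sum_(x <- f p.1) F x.1 x.2 p.2.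
Proof.
rewrite /tensL big_flatten big_map; apply: eq_bigr => p _; by rewrite big_map.
Qed.

Lemma mk_bilin (k : fieldType) (U V W : lmodType k) (f : U -> V -> W) :
  (forall y, lin1 (f ^~ y)) -> (forall x, lin1 (f x)) -> bilin2 f.
Proof. by move=> H1 H2; split=> c x y z; [apply: H1 | apply: H2]. Qed.

Lemma mk_trilin (k : fieldType) (U V X W : lmodType k) (f : U -> V -> X -> W) :
  (forall y z, lin1 (fun x => f x y z)) -> (forall x z, lin1 (fun y => f x y z)) ->
  (forall x y, lin1 (f x y)) -> trilin3 f.
Proof.
move=> H1 H2 H3; split.
- by move=> c x x' y z; apply: (H1 y z).
- by move=> c x y y' z; apply: (H2 x z).
- by move=> c x y z z'; apply: H3.
Qed.

Lemma lin1_comp (k : fieldType) (U V W : lmodType k) (g : U -> V) (h : V -> W) :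
  lin1 g -> lin1 h -> lin1 (fun x => h (g x)).
Proof. by move=> Hg Hh c x y; rewrite Hg Hh. Qed.

Lemma mul_bilin (k : fieldType) (A : algType k) : bilin2 (fun x y : A => x * y).
Proof.
split=> c x y z; first by rewrite mulrDl scalerAl.
by rewrite mulrDr scalerAr.
Qed.

Lemma sum_tensL123 (X Y Z U : Type) (W : zmodType) (f : U -> seq (X * Y)) (s : seq (U * Z)) (F : Z -> X -> Y -> W) :
  \sum_(t <- map (@sig123 _ _ _) (tensL f s)) F t.1.1 t.1.2 t.2 = \sum_(p <- s) \sum_(x <- f p.1) F p.2 x.1 x.2.
Proof. by rewrite big_map (sum_tensL f s (fun x y z => F z x y)). Qed.

Lemma sum_tensL132 (X Y Z U : Type) (W : zmodType) (f : U -> seq (X * Y)) (s : seq (U * Z)) (F : Y -> Z -> X -> W) :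
  \sum_(t <- map (@sig132 _ _ _) (tensL f s)) F t.1.1 t.1.2 t.2 = \sum_(p <- s) \sum_(x <- f p.1) F x.2 p.2 x.1.
Proof. by rewrite big_map (sum_tensL f s (fun x y z => F y z x)). Qed.

Lemma lin1_sumF (k : fieldType) (U W : lmodType k) (I : Type) (s : seq I) (F : I -> U -> W) :
  (forall i, lin1 (F i)) -> lin1 (fun y => \sum_(i <- s) F i y).
Proof.
move=> H c x y; rewrite scaler_sumr -big_split; apply: eq_bigr => i _; exact: H.
Qed.

Lemma lin1_add (k : fieldType) (U W : lmodType k) (f g : U -> W) :
  lin1 f -> lin1 g -> lin1 (fun y => f y + g y).
Proof. by move=> Hf Hg c x y; rewrite Hf Hg scalerDr addrACA. Qed.

Lemma sum_cat (W : zmodType) (I : Type) (s1 s2 : seq I) (F : I -> W) :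
  \sum_(i <- s1 ++ s2) F i = \sum_(i <- s1) F i + \sum_(i <- s2) F i.
Proof. exact: big_cat. Qed.


Lemma fin_comb (W : zmodType) (a1 b1 c1 a2 b2 a3 b3 c3 X1 X2 Y1 Y2 Z : W) :
 a1 + (b1 + c1) = 0 -> a2 + b2 = 0 -> a3 + (b3 + c3) = 0 ->
 a1 = X1 -> a2 + a3 = X2 -> Y1 = - (b1 + b2) -> Y2 = - b3 -> Z = - (c1 + c3) ->
 X1 + X2 - (Y1 + Y2) = Z.
Proof.
move=> h1 h2 h3 <- <- -> -> ->.
apply/eqP; rewrite -subr_eq0 opprK -opprD opprK.
have -> : a1 + (a2 + a3) + ((b1 + b2) + b3) + (c1 + c3)
  = a1 + (b1 + c1) + (a2 + b2) + (a3 + (b3 + c3)).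
  by rewrite !addrA; rewrite (ACl (1*4*7*2*5*3*6*8)%AC).
by rewrite h1 h2 h3 !addr0.
Qed.

Lemma fin2 (W : zmodType) (P1 Q1 P2 Q2 S S' : W) :
  P1 - Q1 = S -> P2 - Q2 = - S' -> S' + S - ((P1 + Q2) - (P2 + Q1)) = 0.
Proof.
move=> h1 h2; have -> : S' = - (P2 - Q2) by rewrite h2 opprK.
rewrite -h1 !opprD !opprK !addrA.
rewrite (ACl (1*3*5*2*4*6*7*8)%AC) /=.
rewrite (ACl (2*3*4*6*5*8*1*7)%AC) /=. by rewrite subrr add0r subrr add0r addNr add0r addNr.
Qed.

Lemma sum_pair (W : zmodType) (I : Type) (x y : I) (F : I -> W) :
  \sum_(i <- [:: x; y]) F i = F x + F y.
Proof. by rewrite !big_cons big_nil addr0. Qed.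
Theorem proposition3p10 (k : fieldType) (A : algType k) (M : lmodType k)
    (dbr : A -> A -> seq (A * A)) (la : A -> M -> M) (ra : M -> A -> M)
    (dbrM : A -> M -> seq (A * M) * seq (M * A)) :
  double_poisson dbr ->
  bimodule la ra ->
  double_poisson_bimodule dbr la ra dbrM ->
  lie_module_mod (@comm_span A) (fun m : M => m = 0)
    (fun a b => mu (dbr a b)) (fun a m => muM la ra (dbrM a m))
  /\
  lie_module_mod (@comm_span A) (bimod_comm_span la ra)
    (fun a b => mu (dbr a b)) (fun a m => muM la ra (dbrM a m)).
Proof.
move=> [[HdL HdR Hskew Hleib] Hjac] [HlaB HraB Hunit Hassoc Hcomm]
  [[HML HMR] Hi1 Hi2 Hii Hiii].
have bmul := mul_bilin A.
have lal y : lin1 (la ^~ y) := bilin_l _ HlaB.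
have lar x : lin1 (la x) := bilin_r _ HlaB.
have ral y : lin1 (ra ^~ y) := bilin_l _ HraB.
have rar x : lin1 (ra x) := bilin_r _ HraB.
have mull y : lin1 (fun x : A => x * y) := bilin_l _ bmul.
have mulr x : lin1 (fun y : A => x * y) := bilin_r _ bmul.
have muM_eq : forall u v, Defs.pair_eq u v -> muM la ra u = muM la ra v.
  by move=> u v H; destruct H as [H1 H2]; rewrite /muM (H1 _ _ HlaB) (H2 _ _ HraB).
pose act a m := muM la ra (dbrM a m).
pose br a b := mu (dbr a b).
have actL m : lin1 (fun a => act a m).
  move=> c x y; rewrite /act (muM_eq _ _ (HML c x y m)) /muM /= !big_cat /=.
  by rewrite !sum_tscale // scalerDr addrACA.
have actR a : lin1 (act a).
  move=> c x y; rewrite /act (muM_eq _ _ (HMR c a x y)) /muM /= !big_cat /=.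
  by rewrite !sum_tscale // scalerDr addrACA.
have brR a : lin1 (br a).
  move=> c x y; rewrite /br /mu (HdR c a x y _ _ bmul) big_cat /=.
  by rewrite sum_tscale.
have act_la a x n : act a (la x n) = la (br a x) n + la x (act a n).
  rewrite /act (muM_eq _ _ (Hi1 a x n)) /muM /= !big_cat !big_map /=.
  rewrite /br /mu (lin1_sum (lal n)) (lin1_D (lar x)) !(lin1_sum (lar x)) addrA.
  congr (_ + _ + _); apply: eq_bigr => p _.
  - by case: (Hassoc p.1 p.2 n) => ->.
  - by case: (Hassoc x p.1 p.2) => ->.
  - by rewrite Hcomm.
have act_ra a x n : act a (ra n x) = ra (act a n) x + ra n (br a x).
  rewrite /act (muM_eq _ _ (Hi2 a x n)) /muM /= !big_cat !big_map /=.
  rewrite /br /mu (lin1_sum (rar n)) (lin1_D (ral x)) !(lin1_sum (ral x)) addrA.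
  congr (_ + _ + _); apply: eq_bigr => p _.
  - by rewrite Hcomm.
  - by case: (Hassoc p.2 x p.1) => _ ->.
  - by case: (Hassoc p.1 p.2 n) => _ ->.
pose K x y m := \sum_(p <- (dbrM x m).1) la (p.1 * y) p.2
                + \sum_(p <- (dbrM x m).2) ra (ra p.1 y) p.2.
have act_mul x y m : act (x * y) m = K y x m + K x y m.
  rewrite /act (muM_eq _ _ (Hii x y m)) /muM /= !big_cat !big_map /=.
  rewrite /K addrACA; congr (_ + _ + _); apply: eq_bigr => p _.
  - by case: (Hassoc p.1 x p.2) => ->.
  - by case: (Hassoc x p.2 p.1) => _ ->.
have Kbil m : bilin2 (fun x y => K x y m).
  apply: mk_bilin => [y|x].
    move=> c x x'; case: (HML c x x' m) => H1 H2; rewrite /K.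
    have B1 : bilin2 (fun u n => la (u * y) n).
      apply: mk_bilin => [n|u]; [exact: lin1_comp (mull y) (lal n) | exact: lar].
    have B2 : bilin2 (fun n u => ra (ra n y) u).
      apply: mk_bilin => [u|n]; [exact: lin1_comp (ral y) (ral u) | exact: rar].
    rewrite (H1 _ _ B1) (H2 _ _ B2) /= !big_cat /=.
    by rewrite (sum_tscale c _ B1) (sum_tscale c _ B2) scalerDr addrACA.
  rewrite /K; apply: lin1_add; apply: lin1_sumF => p.
    exact: lin1_comp (mulr p.1) (lal p.2).
  exact: lin1_comp (rar p.1) (ral p.2).
have tri1 : trilin3 (fun (x y : A) (n : M) => la (x * y) n).
  apply: mk_trilin => [y n|x n|x y]; [exact: lin1_comp (mull y) (lal n) |
    exact: lin1_comp (mulr x) (lal n) | exact: lar].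
have tri2 : trilin3 (fun (x : A) (n : M) (y : A) => ra (la x n) y).
  apply: mk_trilin => [n y|x y|x n]; [exact: lin1_comp (lal n) (ral y) |
    exact: lin1_comp (lar x) (ral y) | exact: rar].
have tri3 : trilin3 (fun (n : M) (x y : A) => ra n (x * y)).
  apply: mk_trilin => [x y|n y|n x]; [exact: ral |
    exact: lin1_comp (mull y) (rar n) | exact: lin1_comp (mulr x) (rar n)].
have J a b m :
  (\sum_(p <- (dbrM b m).1) la (br a p.1) p.2 + \sum_(p <- (dbrM b m).2) ra (act a p.1) p.2)
  - (\sum_(p <- (dbrM a m).1) la p.1 (act b p.2) + \sum_(p <- (dbrM a m).2) ra p.1 (br b p.2))
  = \sum_(p <- dbr a b) K p.1 p.2 m.
  case: (Hiii a b m) => E1 E2 E3.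
  have := E1 _ _ tri1.
  pose g1 := fun (x y : A) (n : M) => la (x * y) n.
  rewrite !sum_cat (sum_tensL123 _ _ g1) (sum_tensL132 _ _ g1) (sum_tensL _ _ g1) /= !big_map /= => {}E1.
  have := E2 _ _ tri2.
  pose g2 := fun (x : A) (n : M) (y : A) => ra (la x n) y.
  rewrite !sum_cat (sum_tensL123 _ _ g2) (sum_tensL _ _ g2) /= !big_map /= => {}E2.
  have := E3 _ _ tri3.
  pose g3 := fun (n : M) (x y : A) => ra n (x * y).
  rewrite !sum_cat (sum_tensL123 _ _ g3) (sum_tensL132 _ _ g3) (sum_tensL _ _ g3) /= !big_map /= => {}E3.
  apply: (fin_comb E1 E2 E3).
  - rewrite /br /mu; apply: eq_bigr => p _; by rewrite (lin1_sum (lal p.2)).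
  - rewrite -big_split; apply: eq_bigr => p _ /=.
    rewrite /act /muM (lin1_D (ral p.2)) !(lin1_sum (ral p.2)); congr (_ + _).
    apply: eq_bigr => x _; by rewrite /g3; case: (Hassoc x.2 p.2 x.1) => _ ->.
  - rewrite -big_split -sumrN; apply: eq_bigr => j _ /=.
    have -> : act b j.2 = - act b (- j.2) by rewrite (lin1_N (actR b)) opprK.
    rewrite (lin1_N (lar j.1)); congr (- _).
    rewrite /act /muM (lin1_D (lar _)) !(lin1_sum (lar _)); congr (_ + _);
      apply: eq_bigr => x _; rewrite /g1 /g2.
      by case: (Hassoc j.1 x.1 x.2) => ->.
    by rewrite Hcomm.
  - rewrite -sumrN; apply: eq_bigr => j _ /=.
    have -> : br b j.2 = - br b (- j.2) by rewrite (lin1_N (brR b)) opprK.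
    by rewrite (lin1_N (rar j.1)) /br /mu (lin1_sum (rar _)).
  - rewrite -big_split -sumrN; apply: eq_bigr => p _ /=.
    rewrite /K !big_map /= opprD -!sumrN; congr (_ + _); apply: eq_bigr => x _ /=.
      by rewrite /g1 (lin1_N (lar _)) opprK.
    rewrite /g3 mulrN (lin1_N (rar _)) opprK.
    by case: (Hassoc p.2 x.2 x.1) => _ ->.
have act_comm c v : comm_span c -> act c v = 0.
  case=> s ->; rewrite (lin1_sum (actL v)) big1 // => p _.
  by rewrite (lin1_B (actL v)) !act_mul [K p.1 p.2 v + _]addrC subrr.
have AA a b v : act a (act b v) =
  (\sum_(p <- (dbrM b v).1) la (br a p.1) p.2 + \sum_(p <- (dbrM b v).2) ra (act a p.1) p.2)
  + (\sum_(p <- (dbrM b v).1) la p.1 (act a p.2) + \sum_(p <- (dbrM b v).2) ra p.1 (br a p.2)).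
  rewrite [act b v]/act /muM (lin1_D (actR a)) !(lin1_sum (actR a)) addrACA.
  rewrite -!big_split; congr (_ + _); apply: eq_bigr => p _.
    exact: act_la.
  exact: act_ra.
have jac a b v : act (br a b) v - (act a (act b v) - act b (act a v)) = 0.
  have -> : act (br a b) v = \sum_(p <- dbr a b) K p.2 p.1 v + \sum_(p <- dbr a b) K p.1 p.2 v.
    by rewrite /br /mu (lin1_sum (actL v)) -big_split; apply: eq_bigr => p _; apply: act_mul.
  rewrite (AA a b v) (AA b a v); apply: fin2; first exact: J.
  by rewrite J (Hskew b a _ _ (Kbil v)) (sum_tflip _ (Kbil v)).
have act0 a : act a 0 = 0 := lin1_0 (actR a).
have part1 : lie_module_mod (@comm_span A) (fun m : M => m = 0)
    (fun a b => mu (dbr a b)) (fun a m => muM la ra (dbrM a m)).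
  split.
  - by move=> c v; apply: act_comm.
  - by move=> a v ->; apply: act0.
  - by move=> c a b v; have := actL v c a b; rewrite /act => ->; rewrite subrr.
  - by move=> c a v w; have := actR a c v w; rewrite /act => ->; rewrite subrr.
  - by move=> a b v; apply: jac.
split=> //.
have z0 : bimod_comm_span la ra 0 by exists [::]; rewrite big_nil.
case: part1 => P1 P2 P3 P4 P5.
split.
- by move=> c v Hc; rewrite (P1 c v Hc).
- move=> a v [s ->].
  change (bimod_comm_span la ra (act a (\sum_(p <- s) (la p.1 p.2 - ra p.2 p.1)))).
  exists (flatten [seq [:: (br a p.1, p.2); (p.1, act a p.2)] | p <- s]).
  rewrite (lin1_sum (actR a)) big_flatten big_map; apply: eq_bigr => p _.
  rewrite sum_pair /= (lin1_B (actR a)) act_la act_ra.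
  by rewrite opprD [- ra _ _ + _]addrC addrACA.
- by move=> c a b v; rewrite (P3 c a b v).
- by move=> c a v w; rewrite (P4 c a v w).
- by move=> a b v; rewrite (P5 a b v).
Qed.
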